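(* Let $a\in(0,1)$, $p\in(0,1)$, and let $X=(X_t)_{t\ge0}$ be a stationary Markov chain generated by the copula $C(u,v)=a\min(u,v)+(1-a)\max(u+v-1,0)$ and Bernoulli($p$) marginal distribution. Then $X$ is exponentially $\psi$-mixing, i.e. there exist constants $K<\infty$ and $r\in[0,1)$ with $\psi(n)\le K r^n$ for all $n$; consequently $X$ is also exponentially $\phi$-, $\rho$-, $\beta$- and $\alpha$-mixing.
   Context: A stationary Markov chain $(X_t)$ is generated by a copula $C$ and a marginal cdf $F$ if each $X_t$ has cdf $F$ and $P(X_t\le x,X_{t+1}\le y)=C(F(x),F(y))$ for all $x,y$; Bernoulli($p$) means $P(X_t=1)=p=1-P(X_t=0)$. For the stationary Markov chain, the mixing coefficients at lag $n$ are defined with respect to $X_0$ and $X_n$: $\psi(n)=\sup\left|\frac{P(X_0\in A,X_n\in B)}{P(X_0\in A)P(X_n\in B)}-1\right|$ over events $A,B$ with $P(X_0\in A)>0$, $P(X_n\in B)>0$, and $\phi(n)=\sup\left|\frac{P(X_0\in A,X_n\in B)}{P(X_0\in A)}-P(X_n\in B)\right|$ over $A,B$ with $P(X_0\in A)>0$. The chain is $\psi$-mixing (resp. $\phi$-mixing) if $\psi(n)\to0$ (resp. $\phi(n)\to0$) as $n\to\infty$; $\rho$-, $\beta$-, $\alpha$-mixing are the standard notions (maximal correlation, absolute regularity, strong mixing). *)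

(* Defs.v *)
From HB Require Import structures.
From mathcomp Require Import all_boot all_order all_algebra.
From mathcomp Require Import all_classical all_reals all_analysis.
Set Implicit Arguments. Unset Strict Implicit. Unset Printing Implicit Defensive.
Import Order.TTheory GRing.Theory Num.Theory.
Import numFieldNormedType.Exports.
Local Open Scope classical_set_scope.
Local Open Scope ring_scope.

Definition mix_copula (R : realType) (a : R) (u v : R) : R :=
  a * Num.min u v + (1 - a) * Num.max (u + v - 1) 0.

Definition bernoulli_cdf (R : realType) (p : R) (x : R) : R :=
  if x < 0 then 0 else if x < 1 then 1 - p else 1.

Section Chain.
Context (d : measure_display) (Omega : measurableType d) (R : realType)
  (P : probability Omega R).

Definition prob (A : set Omega) : R := fine (P A).

Definition copula_generated (X : nat -> Omega -> R) (C : R -> R -> R)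
    (F : R -> R) : Prop :=
  (forall t, measurable_fun setT (X t)) /\
  (forall t x, prob (X t @^-1` `]-oo, x]) = F x) /\
  (forall t x y,
     prob (X t @^-1` `]-oo, x] `&` X t.+1 @^-1` `]-oo, y]) = C (F x) (F y)).

(* Markov property for a chain with (a.s.) discrete state space:
   P(X_0=x_0,...,X_{n+1}=x_{n+1}) P(X_n=x_n)
     = P(X_0=x_0,...,X_n=x_n) P(X_n=x_n, X_{n+1}=x_{n+1}),
   i.e. P(X_{n+1}=x_{n+1} | X_0..X_n) = P(X_{n+1}=x_{n+1} | X_n). *)
Definition discrete_markov (X : nat -> Omega -> R) : Prop :=
  forall (n : nat) (x : nat -> R),
    prob (\bigcap_(i in `I_(n.+2)) X i @^-1` [set x i]) *
      prob (X n @^-1` [set x n]) =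
    prob (\bigcap_(i in `I_(n.+1)) X i @^-1` [set x i]) *
      prob (X n @^-1` [set x n] `&` X n.+1 @^-1` [set x n.+1]).

Local Open Scope ereal_scope.

Definition psi_mix (X : nat -> Omega -> R) (n : nat) : \bar R :=
  ereal_sup [set e | exists A B : set R, [/\ measurable A, measurable B,
     (0 < prob (X 0%N @^-1` A))%R, (0 < prob (X n @^-1` B))%R &
     e = (`| prob (X 0%N @^-1` A `&` X n @^-1` B) /
             (prob (X 0%N @^-1` A) * prob (X n @^-1` B)) - 1 |)%:E]].

Definition phi_mix (X : nat -> Omega -> R) (n : nat) : \bar R :=
  ereal_sup [set e | exists A B : set R, [/\ measurable A, measurable B,
     (0 < prob (X 0%N @^-1` A))%R &
     e = (`| prob (X 0%N @^-1` A `&` X n @^-1` B) / prob (X 0%N @^-1` A)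
             - prob (X n @^-1` B) |)%:E]].

Definition alpha_mix (X : nat -> Omega -> R) (n : nat) : \bar R :=
  ereal_sup [set e | exists A B : set R, [/\ measurable A, measurable B &
     e = (`| prob (X 0%N @^-1` A `&` X n @^-1` B)
             - prob (X 0%N @^-1` A) * prob (X n @^-1` B) |)%:E]].

Definition fin_partition (I : nat) (A : 'I_I -> set R) : Prop :=
  [/\ forall i, measurable (A i), trivIset setT A & \bigcup_(i in setT) A i = setT].

Definition beta_mix (X : nat -> Omega -> R) (n : nat) : \bar R :=
  ereal_sup [set e | exists (I J : nat) (A : 'I_I -> set R) (B : 'I_J -> set R),
     [/\ fin_partition A, fin_partition B &
     e = (2^-1 * \sum_(i < I) \sum_(j < J)
            `| prob (X 0%N @^-1` A i `&` X n @^-1` B j)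
               - prob (X 0%N @^-1` A i) * prob (X n @^-1` B j) |)%:E]].

Definition expect (Y : Omega -> R) : R := Rintegral P setT Y.

Definition square_integrable (Y : Omega -> R) : Prop :=
  measurable_fun setT Y /\ P.-integrable setT (fun w => ((Y w) ^+ 2)%:E).

Definition var (Y : Omega -> R) : R := (expect (fun w => Y w ^+ 2) - expect Y ^+ 2)%R.

Definition cov (Y Z : Omega -> R) : R :=
  (expect (fun w => Y w * Z w) - expect Y * expect Z)%R.

Definition rho_mix (X : nat -> Omega -> R) (n : nat) : \bar R :=
  ereal_sup [set e | exists f g : R -> R,
     [/\ measurable_fun setT f /\ measurable_fun setT g,
         square_integrable (f \o X 0%N) /\ square_integrable (g \o X n),
         (0 < var (f \o X 0%N))%R /\ (0 < var (g \o X n))%R &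
     e = (`| cov (f \o X 0%N) (g \o X n) |
            / Num.sqrt (var (f \o X 0%N) * var (g \o X n)))%:E]].

Definition exp_decay (c : nat -> \bar R) : Prop :=
  exists K r : R, [/\ (0 <= r)%R, (r < 1)%R & forall n, c n <= (K * r ^+ n)%:E].

End Chain.

(* Main.v *)
Require Import Defs.
From HB Require Import structures.
From mathcomp Require Import all_boot all_order all_algebra.
From mathcomp Require Import all_classical all_reals all_analysis.
From mathcomp Require Import ring lra.
Import Order.TTheory GRing.Theory Num.Theory.
Local Open Scope ring_scope.
Set Implicit Arguments. Unset Strict Implicit. Unset Printing Implicit Defensive.

Section Proofs.
Local Open Scope classical_set_scope.
Context (R : realType) (a p : R) (d : measure_display)
  (Omega : measurableType d) (P : probability Omega R) (X : nat -> Omega -> R).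
Hypothesis ha : 0 < a < 1.
Hypothesis hp : 0 < p < 1.
Hypothesis hC : copula_generated P X (mix_copula a) (bernoulli_cdf p).
Hypothesis hM : discrete_markov P X.

Local Notation pr := (prob P).

Lemma mX t : measurable_fun setT (X t).
Proof. by case: hC. Qed.

Lemma mpre t (A : set R) : measurable A -> measurable (X t @^-1` A).
Proof. by move=> mA; rewrite -[X t @^-1` A]setTI; apply: mX. Qed.

Lemma finP (A : set Omega) : measurable A -> P A \is a fin_num.
Proof. by move=> mA; apply: fin_num_measure. Qed.

Lemma prE (A : set Omega) : measurable A -> P A = (pr A)%:E.
Proof. by move=> mA; rewrite /prob fineK// finP. Qed.

Lemma pr_ge0 A : 0 <= pr A.
Proof. by rewrite /prob fine_ge0. Qed.

Lemma pr_le A B : measurable A -> measurable B -> A `<=` B -> pr A <= pr B.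
Proof.
move=> mA mB AB; rewrite /prob fine_le ?finP//.
by apply: le_measure; rewrite ?inE.
Qed.

Lemma pr_le1 A : measurable A -> pr A <= 1.
Proof.
move=> mA; rewrite -lee_fin -prE//; exact: probability_le1.
Qed.

Lemma prU A B : measurable A -> measurable B -> A `&` B = set0 ->
  pr (A `|` B) = pr A + pr B.
Proof.
move=> mA mB AB; rewrite /prob measureU// fineD// ?finP//; exact: measurableU.
Qed.

Lemma pr0 A : measurable A -> pr A = 0 -> P A = 0%E.
Proof. by move=> mA h; rewrite prE// h. Qed.

Lemma prT : pr setT = 1.
Proof. by rewrite /prob probability_setT. Qed.

Lemma pr_set0 : pr set0 = 0.
Proof. by rewrite /prob measure0. Qed.

Lemma prD A B : measurable A -> measurable B -> B `<=` A ->
  pr (A `\` B) = pr A - pr B.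
Proof.
move=> mA mB BA.
have -> : pr A = pr ((A `\` B) `|` B) by rewrite setUC setDUK.
rewrite prU//; first by rewrite addrK.
  exact: measurableD.
by rewrite setIC setDIK.
Qed.

Lemma cdfE t x : pr (X t @^-1` `]-oo, x]) = bernoulli_cdf p x.
Proof. by case: hC => _ [h _]; apply: h. Qed.

Lemma mitv (x : R) : measurable (`]-oo, x] : set R).
Proof. exact: measurable_itv. Qed.

Lemma mset1 (x : R) : measurable [set x].
Proof. exact: measurable_set1. Qed.

Lemma inv_pos (k : nat) : 0 < k.+1%:R^-1 :> R.
Proof. by rewrite invr_gt0 ltr0n. Qed.

Lemma inv_le1 (k : nat) : k.+1%:R^-1 <= 1 :> R.
Proof. by rewrite invf_le1 ?ltr0n// ler1n. Qed.

Lemma null1 t : P.-negligible [set w | X t w < 0].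
Proof.
apply: (@negligibleS _ _ _ _ (\bigcup_k X t @^-1` `]-oo, - k.+1%:R^-1])).
- move=> w /= hw; have [k hk] := ltr_add_invr hw.
  exists k => //=; rewrite in_itv /=; apply: ltW; by rewrite -subr_lt0 opprK.
- apply: negligible_bigcup => k; apply/negligibleP; first exact: mpre (mitv _).
  apply: pr0; first exact: mpre (mitv _).
  rewrite cdfE /bernoulli_cdf oppr_lt0 inv_pos //.
Qed.
Lemma null2 t : P.-negligible [set w | 0 < X t w < 1].
Proof.
apply: (@negligibleS _ _ _ _ (\bigcup_k (X t @^-1` `]-oo, 1 - k.+1%:R^-1]
   `\` X t @^-1` `]-oo, 0]))).
- move=> w /= /andP[h0 h1]; have [k hk] := ltr_add_invr h1.
  exists k => //=; rewrite !in_itv /=; set e := k.+1%:R^-1 in hk *.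
  split; first lra.
  by apply/negP; rewrite -ltNge.
- apply: negligible_bigcup => k.
  have m1 := mpre t (mitv (1 - k.+1%:R^-1)).
  have m0 := mpre t (mitv 0).
  have mD : measurable (X t @^-1` `]-oo, 1 - k.+1%:R^-1] `\` X t @^-1` `]-oo, 0]).
    exact: measurableD.
  apply/negligibleP => //; apply: pr0 => //.
  have sub : X t @^-1` `]-oo, 0] `<=` X t @^-1` `]-oo, 1 - k.+1%:R^-1].
    move=> w /=; rewrite !in_itv /= => h.
    have := inv_le1 k; set e := k.+1%:R^-1 => he; lra.
  rewrite prD // !cdfE /bernoulli_cdf ltxx ltr01.
  have := inv_le1 k; have := inv_pos k; set e := k.+1%:R^-1 => h1 h2.
  have -> : (1 - e < 0) = false by apply/negbTE; rewrite -leNgt; lra.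
  have -> : (1 - e < 1) = true by apply/idP; lra.
  by rewrite subrr.
Qed.

Lemma null3 t : P.-negligible [set w | 1 < X t w].
Proof.
have m1 := mpre t (mitv 1).
have -> : [set w | 1 < X t w] = ~` (X t @^-1` `]-oo, 1]).
  by apply/seteqP; split => w /=; rewrite in_itv /= ltNge => /negP.
apply/negligibleP; first exact: measurableC.
apply: eq_trans (probability_setC P m1) _; rewrite prE // cdfE /bernoulli_cdf ltr10 ltxx.
by rewrite subee.
Qed.

Lemma nullt t : P.-negligible (~` (X t @^-1` [set 0] `|` X t @^-1` [set 1])).
Proof.
apply: (@negligibleS _ _ _ _ (([set w | X t w < 0] `|` [set w | 0 < X t w < 1])
   `|` [set w | 1 < X t w])).
- move=> w /= h.
  have h0 : X t w != 0 by apply/eqP => e; apply: h; left.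
  have h1 : X t w != 1 by apply/eqP => e; apply: h; right.
  case: (ltgtP (X t w) 0) => [l|g|e]; last by rewrite e eqxx in h0.
    by left; left.
  case: (ltgtP (X t w) 1) => [l|g'|e]; last by rewrite e eqxx in h1.
    by left; right; apply/andP.
  by right.
- by apply: negligibleU; [apply: negligibleU|]; [exact: null1|exact: null2|exact: null3].
Qed.

Definition G := [set w | forall t, X t w = 0 \/ X t w = 1].

Lemma negG : P.-negligible (~` G).
Proof.
apply: (@negligibleS _ _ _ _ (\bigcup_t ~` (X t @^-1` [set 0] `|` X t @^-1` [set 1]))).
  move=> w nG; apply: contrapT => H; apply: nG => t.
  apply: contrapT => Ht; apply: H; exists t => //.
by apply: negligible_bigcup => t; exact: nullt.
Qed.

Lemma pr_eqG A B : measurable A -> measurable B ->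
  (forall w, G w -> (A w <-> B w)) -> pr A = pr B.
Proof.
move=> mA mB AB; have [N [mN PN GN]] := negG.
have key C : measurable C -> pr C = pr (C `\` N).
  move=> mC; have mI : measurable (C `&` N) by exact: measurableI.
  have mD : measurable (C `\` N) by exact: measurableD.
  rewrite -{1}(setUIDK C N) setUC prU //; last first.
    by apply/seteqP; split => w // [[_ nw] [_ ]].
  have : pr (C `&` N) <= pr N by apply: pr_le.
  rewrite {2}/prob PN /= => h.
  have h0 := pr_ge0 (C `&` N).
  have -> : pr (C `&` N) = 0 by apply/eqP; rewrite eq_le h h0.
  by rewrite addr0.
rewrite (key A mA) (key B mB); congr pr.
apply/seteqP; split => w [h1 h2]; split => //.
- by apply/(AB w) => //; apply: contrapT => nG; apply: h2; apply: GN.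
- by apply/(AB w) => //; apply: contrapT => nG; apply: h2; apply: GN.
Qed.
Lemma pr_eq0 A B : measurable A -> measurable B -> A `<=` B -> pr B = 0 -> pr A = 0.
Proof.
move=> mA mB AB h; apply/eqP; rewrite eq_le pr_ge0 andbT -h; exact: pr_le.
Qed.

Lemma part k A : measurable A ->
  pr A = pr (A `&` X k @^-1` [set 0]) + pr (A `&` X k @^-1` [set 1]).
Proof.
move=> mA; have m0 := mpre k (mset1 0); have m1 := mpre k (mset1 1).
rewrite -prU; first 1 last.
- exact: measurableI.
- exact: measurableI.
- apply/seteqP; split => w // [[_ /= h0] [_ /= h1]].
  by move: h1; rewrite h0 => /eqP; rewrite eq_sym oner_eq0.
apply: pr_eqG => //; first by apply: measurableU; exact: measurableI.
move=> w Gw; split => [Aw|[[]|[]]] //.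
by case: (Gw k) => h; [left|right].
Qed.

Definition pi (y : R) : R := if y == 1 then p else if y == 0 then 1 - p else 0.
Definition dl (i j : R) : R := (i == j)%:R.
Definition M := Num.max p (1 - p).
Definition lam := 1 - (1 - a) / M.
Definition Tn n i j := pi j + lam ^+ n * (dl i j - pi j).

Lemma e01 : (0 == 1 :> R) = false. Proof. by rewrite eq_sym oner_eq0. Qed.
Lemma e10 : (1 == 0 :> R) = false. Proof. by rewrite oner_eq0. Qed.
Lemma pi0 : pi 0 = 1 - p. Proof. by rewrite /pi e01 eqxx. Qed.
Lemma pi1 : pi 1 = p. Proof. by rewrite /pi eqxx. Qed.
Lemma piN y : y != 0 -> y != 1 -> pi y = 0.
Proof. by move=> h0 h1; rewrite /pi (negbTE h0) (negbTE h1). Qed.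
Lemma dl00 : dl 0 0 = 1. Proof. by rewrite /dl eqxx. Qed.
Lemma dl11 : dl 1 1 = 1. Proof. by rewrite /dl eqxx. Qed.
Lemma dl01 : dl 0 1 = 0. Proof. by rewrite /dl e01. Qed.
Lemma dl10 : dl 1 0 = 0. Proof. by rewrite /dl e10. Qed.

Lemma pi_dl j : pi j = dl 1 j * p + dl 0 j * (1 - p).
Proof.
have [->|h0] := eqVneq j 0; first by rewrite pi0 dl00 dl10; ring.
have [->|h1] := eqVneq j 1; first by rewrite pi1 dl11 dl01; ring.
by rewrite piN // /dl eq_sym (negbTE h1) eq_sym (negbTE h0) /= mul0r mul0r addr0.
Qed.

Lemma pr_pt t y : pr (X t @^-1` [set y]) = pi y.
Proof.
have m0 := mpre t (mset1 0); have m1 := mpre t (mset1 1).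
have P0 : pr (X t @^-1` [set 0]) = 1 - p.
  rewrite -[1 - p](_ : bernoulli_cdf p 0 = _); last by rewrite /bernoulli_cdf ltxx ltr01.
  rewrite -(cdfE t); apply: pr_eqG => //; first exact: mpre (mitv 0).
  move=> w Gw /=; rewrite in_itv /=; split => [->//|h].
  by case: (Gw t) => // e; move: h; rewrite e ler10.
have [->|h0] := eqVneq y 0; first by rewrite pi0.
have [->|h1] := eqVneq y 1.
  have := part t (@measurableT _ Omega); rewrite !setTI prT P0 pi1 => h; lra.
rewrite piN // -pr_set0; apply: pr_eqG => //; first exact: mpre (mset1 y).
move=> w Gw /=; split => // e; case: (Gw t) => e'; rewrite e' in e.
  by rewrite e eqxx in h0.
by rewrite e eqxx in h1.
Qed.

Definition J := mix_copula a (1 - p) (1 - p).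

Lemma Jval : J = (1 - p) * ((1 - p) + lam * p).
Proof.
have [a0 a1] := andP ha; have [p0 p1] := andP hp.
rewrite /J /mix_copula /lam /M minxx.
case: (leP p (1 - p)) => h.
  rewrite max_l; last lra.
  field; apply/eqP => e; lra.
rewrite max_r; last lra.
field; apply/eqP => e; lra.
Qed.

Lemma P00 t : pr (X t @^-1` [set 0] `&` X t.+1 @^-1` [set 0]) = J.
Proof.
case: hC => _ [hF hJ].
have := hJ t 0 0; rewrite /bernoulli_cdf ltxx ltr01 -/J => <-.
apply: pr_eqG; [apply: measurableI; exact: mpre (mset1 _)|
                apply: measurableI; exact: mpre (mitv _)|].
move=> w Gw /=; rewrite !in_itv /=.
split => [[-> ->]//|[h1 h2]]; split.
  by case: (Gw t) => // e; move: h1; rewrite e ler10.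
by case: (Gw t.+1) => // e; move: h2; rewrite e ler10.
Qed.

Lemma mpt t y : measurable (X t @^-1` [set y]).
Proof. exact: mpre (mset1 y). Qed.

Lemma mpt2 t s y z : measurable (X t @^-1` [set y] `&` X s @^-1` [set z]).
Proof. by apply: measurableI; apply: mpt. Qed.

Lemma pair t i j : pr (X t @^-1` [set i] `&` X t.+1 @^-1` [set j]) = pi i * Tn 1 i j.
Proof.
have [p0 p1] := andP hp.
have Pt := part t.+1 (mpt t 0).
have Ps := part t (mpt t.+1 0).
have Pu := part t.+1 (mpt t 1).
rewrite !pr_pt ?pi0 ?pi1 P00 Jval in Pt Ps Pu.
rewrite setIC P00 Jval [X in _ + pr X]setIC in Ps.
have [i0|i0] := boolP ((i == 0) || (i == 1)); last first.
  move: i0; rewrite negb_or => /andP[h0 h1].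
  rewrite piN // mul0r; apply: (@pr_eq0 _ (X t @^-1` [set i]));
    [exact: mpt2|exact: mpt|by move=> w []|by rewrite pr_pt piN].
have [j0|j0] := boolP ((j == 0) || (j == 1)); last first.
  move: j0; rewrite negb_or => /andP[h0 h1].
  rewrite /Tn (piN h0 h1) /dl.
  have -> : (i == j) = false.
    by case/orP: i0 => /eqP ->; apply/negbTE; rewrite // eq_sym.
  rewrite /= subr0 !mulr0 addr0 mulr0; apply: (@pr_eq0 _ (X t.+1 @^-1` [set j]));
    [exact: mpt2|exact: mpt|by move=> w []|by rewrite pr_pt piN].
rewrite /Tn.
case/orP: i0 => /eqP ->; case/orP: j0 => /eqP ->;
  rewrite ?pi0 ?pi1 ?dl00 ?dl01 ?dl10 ?dl11 ?P00 ?Jval.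
- ring.
- rewrite expr1; lra.
- rewrite expr1; lra.
- rewrite expr1; lra.
Qed.

Definition S m (x : nat -> R) := \bigcap_(i in `I_(m.+1)) X i @^-1` [set x i].

Lemma mS m x : measurable (S m x).
Proof. by apply: bigcap_measurable; [exists 0%N => /=|move=> k _; exact: mpt]. Qed.

Lemma S_succ m x : S m.+1 x = S m x `&` X m.+1 @^-1` [set x m.+1].
Proof.
apply/seteqP; split => w.
  move=> H; split; last by apply: H => /=.
  by move=> i /= hi; apply: H => /=; apply: ltnW.
move=> [H1 H2] i /=; rewrite ltnS leq_eqVlt => /orP[/eqP ->//|hi].
exact: H1.
Qed.

Lemma S_ext m x y : (forall i, (i <= m)%N -> x i = y i) -> S m x = S m y.
Proof.
move=> h; apply/seteqP; split => w H i /= hi.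
  by rewrite -h //; apply: H.
by rewrite h //; apply: H.
Qed.

Lemma S_sub m x : S m x `<=` X m @^-1` [set x m].
Proof. by move=> w H; apply: H => /=. Qed.

Lemma S0 x : S 0 x = X 0 @^-1` [set x 0%N].
Proof.
apply/seteqP; split => w; first exact: S_sub.
by move=> H i /=; rewrite ltnS leqn0 => /eqP ->.
Qed.

Definition upd (x : nat -> R) m (k : R) := fun i => if i == m.+1 then k else x i.

Lemma S_upd m x k : S m.+1 (upd x m k) = S m x `&` X m.+1 @^-1` [set k].
Proof.
rewrite S_succ /upd eqxx (@S_ext m _ x) // => i hi.
by have -> : (i == m.+1) = false by apply/negbTE; rewrite neq_ltn ltnS hi.
Qed.

Lemma Spi0 m x : pi (x m) = 0 -> pr (S m x) = 0.
Proof.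
move=> h; apply: (@pr_eq0 _ (X m @^-1` [set x m])) => //; [exact: mS|exact: mpt|exact: S_sub|].
by rewrite pr_pt.
Qed.

Lemma Lbase m x j : pr (S m x `&` X m.+1 @^-1` [set j]) = pr (S m x) * Tn 1 (x m) j.
Proof.
have := hM m (upd x m j).
rewrite -/(S m.+1 _) -/(S m _) S_upd (@S_ext m (upd x m j) x); last first.
  by move=> i hi; rewrite /upd; have -> : (i == m.+1) = false by apply/negbTE; rewrite neq_ltn ltnS hi.
have -> : upd x m j m = x m by rewrite /upd; have -> : (m == m.+1) = false by apply/negbTE; rewrite neq_ltn ltnSn.
have -> : upd x m j m.+1 = j by rewrite /upd eqxx.
rewrite pr_pt pair.
have [h|h] := eqVneq (pi (x m)) 0.
  move=> _; rewrite Spi0 // mul0r; apply: (@pr_eq0 _ (S m x)).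
  - by apply: measurableI; [exact: mS|exact: mpt].
  - exact: mS.
  - by move=> w [].
  - exact: Spi0.
by move=> e; apply: (mulIf h); rewrite e; ring.
Qed.

Lemma CK i j n : (i == 0) || (i == 1) ->
  Tn 1 i 0 * Tn n 0 j + Tn 1 i 1 * Tn n 1 j = Tn n.+1 i j.
Proof.
rewrite /Tn (pi_dl j) expr1 exprS; case/orP => /eqP ->;
  rewrite ?pi0 ?pi1 ?dl00 ?dl01 ?dl10 ?dl11; ring.
Qed.

Lemma Lind dd : forall m x j,
  pr (S m x `&` X (m + dd).+1 @^-1` [set j]) = pr (S m x) * Tn dd.+1 (x m) j.
Proof.
elim: dd => [|dd IH] m x j; first by rewrite addn0 Lbase.
have mA : measurable (S m x `&` X (m + dd.+1).+1 @^-1` [set j]).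
  by apply: measurableI; [exact: mS|exact: mpt].
rewrite (part m.+1 mA).
have E k : pr ((S m x `&` X (m + dd.+1).+1 @^-1` [set j]) `&` X m.+1 @^-1` [set k])
    = pr (S m x) * Tn 1 (x m) k * Tn dd.+1 k j.
  rewrite setIAC -S_upd addnS -addSn IH -Lbase S_upd.
  by congr (pr _ * Tn _ _ _); rewrite /upd eqxx.
rewrite !E.
have [h|h] := boolP ((x m == 0) || (x m == 1)).
  by rewrite -(CK j dd.+1 h); ring.
move: h; rewrite negb_or => /andP[h0 h1].
by rewrite Spi0 ?piN //; ring.
Qed.

Lemma joint n i j : pr (X 0 @^-1` [set i] `&` X n @^-1` [set j]) = pi i * Tn n i j.
Proof.
case: n => [|n].
  rewrite /Tn expr0 mul1r /dl.
  have [->|h] := eqVneq i j; first by rewrite setIid pr_pt /=; ring.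
  rewrite /= sub0r addrN mulr0 -pr_set0.
  congr pr; apply/seteqP; split => w // [/= e1 e2].
  by move: h; rewrite -e1 -e2 eqxx.
have := Lind n 0 (fun _ => i) j; rewrite add0n S0 => ->.
by rewrite pr_pt.
Qed.

Definition ind (A : set R) (x : R) : R := if `[< A x >] then 1 else 0.

Lemma ind01 A x : ind A x = 0 \/ ind A x = 1.
Proof. by rewrite /ind; case: asboolP; [right|left]. Qed.

Lemma setcase k (A : set R) i :
  X k @^-1` A `&` X k @^-1` [set i] = if `[< A i >] then X k @^-1` [set i] else set0.
Proof.
case: asboolP => h; apply/seteqP; split => w /=.
- by case.
- by move=> e; split => //; rewrite e.
- by case => Aw e; apply: h; rewrite -e.
- by [].
Qed.

Lemma marg k A : measurable A -> pr (X k @^-1` A) = ind A 0 * (1 - p) + ind A 1 * p.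
Proof.
move=> mA; rewrite (part k (mpre k mA)) !setcase /ind.
by case: asboolP => _; case: asboolP => _; rewrite ?pr_pt ?pi0 ?pi1 ?pr_set0; ring.
Qed.

Lemma quad (A B C D : set Omega) : A `&` B `&` C `&` D = (A `&` C) `&` (B `&` D).
Proof. by rewrite -setIA setIACA. Qed.

Lemma jointAB n A B : measurable A -> measurable B ->
  pr (X 0 @^-1` A `&` X n @^-1` B) =
  ind A 0 * ind B 0 * pi 0 * Tn n 0 0 + ind A 0 * ind B 1 * pi 0 * Tn n 0 1 +
  ind A 1 * ind B 0 * pi 1 * Tn n 1 0 + ind A 1 * ind B 1 * pi 1 * Tn n 1 1.
Proof.
move=> mA mB.
have mE : measurable (X 0 @^-1` A `&` X n @^-1` B) by apply: measurableI; exact: mpre.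
rewrite (part 0 mE).
rewrite (part n (measurableI _ _ mE (mpt 0 0))) (part n (measurableI _ _ mE (mpt 0 1))).
rewrite !quad !setcase /ind.
by do 4 (case: asboolP => _); rewrite ?setI0 ?set0I ?pr_set0 ?joint; ring.
Qed.

Definition ca A := ind A 1 - ind A 0.

Lemma Dform n A B : measurable A -> measurable B ->
  pr (X 0 @^-1` A `&` X n @^-1` B) - pr (X 0 @^-1` A) * pr (X n @^-1` B) =
  lam ^+ n * (p * (1 - p)) * (ca A * ca B).
Proof.
move=> mA mB; rewrite jointAB // !marg // /ca /Tn pi0 pi1 dl00 dl01 dl10 dl11; ring.
Qed.

Lemma ca_le1 A : `|ca A| <= 1.
Proof.
rewrite /ca; case: (ind01 A 0) => ->; case: (ind01 A 1) => ->;
  rewrite ?subrr ?subr0 ?sub0r ?normr0 ?normrN ?normr1 //.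
Qed.

Lemma ca_le A : `|ca A| <= ind A 1 + ind A 0.
Proof.
rewrite /ca; case: (ind01 A 0) => ->; case: (ind01 A 1) => ->;
  rewrite ?subrr ?subr0 ?sub0r ?normr0 ?normrN ?normr1 ?addr0 ?add0r //.
Qed.

Lemma pq_pos : 0 < p * (1 - p).
Proof. have [p0 p1] := andP hp; apply: mulr_gt0 => //; lra. Qed.

Lemma pq_le1 : p * (1 - p) <= 1.
Proof. have [p0 p1] := andP hp; nra. Qed.

Lemma M_ge : p <= M /\ 1 - p <= M.
Proof. by rewrite /M !le_max !lexx orbT. Qed.

Lemma lam_lt1 : `|lam| < 1.
Proof.
have [a0 a1] := andP ha; have [p0 p1] := andP hp.
have [h1 h2] := M_ge.
have M0 : 0 < M by lra.
have hq : (1 - a) / M < 2 by rewrite ltr_pdivrMr //; lra.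
have hq' : 0 < (1 - a) / M by apply: divr_gt0 => //; lra.
rewrite ltr_norml /lam; apply/andP; split; lra.
Qed.

Lemma Dbound n A B : measurable A -> measurable B ->
  `|pr (X 0 @^-1` A `&` X n @^-1` B) - pr (X 0 @^-1` A) * pr (X n @^-1` B)|
  <= `|lam| ^+ n * (p * (1 - p)).
Proof.
move=> mA mB; rewrite Dform // normrM normrM normrX (gtr0_norm pq_pos) normrM.
apply: ler_piMr; first by apply: mulr_ge0 => //; apply: ltW; exact: pq_pos.
rewrite -[1]mulr1; apply: ler_pM => //; exact: ca_le1.
Qed.

Lemma prpos k A : measurable A -> 0 < pr (X k @^-1` A) -> p * (1 - p) <= pr (X k @^-1` A).
Proof.
have [p0 p1] := andP hp.
have h1 : p * (1 - p) <= p by nra.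
have h2 : p * (1 - p) <= 1 - p by nra.
move=> mA; rewrite marg //; case: (ind01 A 0) => ->; case: (ind01 A 1) => ->; lra.
Qed.

Local Notation r := (`|lam|).

Lemma r_ge0 : 0 <= r. Proof. exact: normr_ge0. Qed.

Lemma psi_dec : exp_decay (psi_mix P X).
Proof.
exists (p * (1 - p))^-1, r; split; [exact: r_ge0|exact: lam_lt1|] => n.
apply: ge_ereal_sup => _ [A [B [mA mB PA PB ->]]]; rewrite lee_fin.
set a0 := pr (X 0 @^-1` A) in PA *; set b0 := pr (X n @^-1` B) in PB *.
set c := pr _.
have PAB : 0 < a0 * b0 by apply: mulr_gt0.
have -> : c / (a0 * b0) - 1 = (c - a0 * b0) / (a0 * b0).
  by field; rewrite (gt_eqF PA) (gt_eqF PB).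
rewrite normrM normfV (gtr0_norm PAB).
rewrite ler_pdivrMr //.
apply: (le_trans (Dbound n mA mB)).
have hpq := pq_pos.
have ha0 := prpos mA PA; have hb0 := prpos mB PB.
have pn : p != 0 by have [p0 _] := andP hp; rewrite gt_eqF.
have qn : 1 - p != 0 by have [_ p1] := andP hp; rewrite subr_eq0 eq_sym lt_eqF.
have e : r ^+ n * (p * (1 - p)) = (p * (1 - p))^-1 * r ^+ n * ((p * (1 - p)) * (p * (1 - p))).
  by field; rewrite ?pn ?qn.
rewrite e; apply: ler_wpM2l.
  by apply: mulr_ge0; [rewrite invr_ge0 ltW|exact: exprn_ge0 r_ge0].
by apply: ler_pM => //; apply: ltW.
Qed.

Lemma phi_dec : exp_decay (phi_mix P X).
Proof.
exists 1, r; split; [exact: r_ge0|exact: lam_lt1|] => n.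
apply: ge_ereal_sup => _ [A [B [mA mB PA ->]]]; rewrite lee_fin mul1r.
set a0 := pr (X 0 @^-1` A) in PA *; set b0 := pr (X n @^-1` B).
set c := pr _.
have -> : c / a0 - b0 = (c - a0 * b0) / a0.
  by field; rewrite (gt_eqF PA).
rewrite normrM normfV (gtr0_norm PA).
rewrite ler_pdivrMr //.
apply: (le_trans (Dbound n mA mB)).
have hpq := pq_pos.
have ha0 := prpos mA PA.
apply: ler_wpM2l => //; exact: exprn_ge0 r_ge0.
Qed.

Lemma alpha_dec : exp_decay (alpha_mix P X).
Proof.
exists 1, r; split; [exact: r_ge0|exact: lam_lt1|] => n.
apply: ge_ereal_sup => _ [A [B [mA mB ->]]]; rewrite lee_fin mul1r.
apply: (le_trans (Dbound n mA mB)).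
apply: ler_piMr; [exact: exprn_ge0 r_ge0|exact: pq_le1].
Qed.

Lemma sum_ind (I : nat) (A : 'I_I -> set R) x : trivIset setT A ->
  \sum_(i < I) ind (A i) x <= 1.
Proof.
move=> tA; case: (pselect (exists i, A i x)) => [[i0 Ai0]|nA].
  rewrite (bigD1 i0) //= big1 ?addr0 /ind.
    by case: asboolP.
  move=> i ni; case: asboolP => // Aix.
  have h := tA i i0 Logic.I Logic.I.
  by move: ni; rewrite h ?eqxx //; exists x.
rewrite big1 // => i _; rewrite /ind; case: asboolP => // Aix.
by exfalso; apply: nA; exists i.
Qed.

Lemma sum_ca (I : nat) (A : 'I_I -> set R) : trivIset setT A ->
  \sum_(i < I) `|ca (A i)| <= 2.
Proof.
move=> tA; apply: (le_trans (ler_sum _ (fun i _ => ca_le (A i)))).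
rewrite big_split /=.
have := sum_ind 1 tA; have := sum_ind 0 tA; lra.
Qed.

Lemma beta_dec : exp_decay (beta_mix P X).
Proof.
exists 2, r; split; [exact: r_ge0|exact: lam_lt1|] => n.
apply: ge_ereal_sup => _ [I [J [A [B [[mA tA _] [mB tB _] ->]]]]]; rewrite lee_fin.
set c := r ^+ n * (p * (1 - p)).
have E i j : `|pr (X 0 @^-1` A i `&` X n @^-1` B j) -
       pr (X 0 @^-1` A i) * pr (X n @^-1` B j)| = c * `|ca (A i)| * `|ca (B j)|.
  rewrite Dform // normrM normrM normrX (gtr0_norm pq_pos) normrM /c; ring.
rewrite (eq_bigr (fun i => c * `|ca (A i)| * \sum_(j < J) `|ca (B j)|)); last first.
  by move=> i _; rewrite mulr_sumr; apply: eq_bigr => j _; rewrite E.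
rewrite -mulr_suml -mulr_sumr.
have c0 : 0 <= c by apply: mulr_ge0; [exact: exprn_ge0 r_ge0|exact: ltW pq_pos].
have hc : c <= r ^+ n by apply: ler_piMr; [exact: exprn_ge0 r_ge0|exact: pq_le1].
have s1 := sum_ca tA; have s2 := sum_ca tB.
have s1' : 0 <= \sum_(i < I) `|ca (A i)| by apply: sumr_ge0 => i _.
have s2' : 0 <= \sum_(j < J) `|ca (B j)| by apply: sumr_ge0 => i _.
have : c * (\sum_(i < I) `|ca (A i)|) * (\sum_(j < J) `|ca (B j)|) <= c * 2 * 2.
  by apply: ler_pM; [exact: mulr_ge0|by []|exact: ler_wpM2l|by []].
have rn := exprn_ge0 n r_ge0.
set s := _ * _ * _; move=> hs; nra.
Qed.

Lemma exp_simple N (c : 'I_N -> R) (E : 'I_N -> set Omega) (h : Omega -> R) :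
  measurable_fun setT h -> (forall k, measurable (E k)) ->
  (forall w, G w -> h w = \sum_(k < N) c k * \1_(E k) w) ->
  expect P h = \sum_(k < N) c k * pr (E k).
Proof.
move=> mh mE hG.
pose h' := fun w => \sum_(k < N) c k * \1_(E k) w.
have mh' : measurable_fun setT h'.
  apply: measurable_sum => k; apply: measurable_realfun.measurable_funM.
    exact: measurable_cst.
  exact: measurable_realfun.measurable_indic.
have intk k : P.-integrable setT (fun w => (c k * \1_(E k) w)%:E).
  have := integrableZl measurableT (c k) (integrable_indic P (mE k)).
  by congr (_.-integrable _ _); apply/funext => w; rewrite EFinM.
rewrite /expect /Rintegral.
rewrite (ae_eq_integral (EFin \o h')) //; last 3 first.
- exact/measurable_realfun.measurable_EFinP.
- exact/measurable_realfun.measurable_EFinP.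
- apply: (negligibleS _ negG) => w /= nH Gw; apply: nH => _ /=.
  by rewrite hG.
rewrite (eq_integral (fun w => \sum_(k < N) (c k * \1_(E k) w)%:E)); last first.
  by move=> w _; rewrite sumEFin.
rewrite integral_sum //.
rewrite (eq_bigr (fun k => (c k * pr (E k))%:E)); last first.
  move=> k _.
  rewrite (eq_integral (fun w => ((c k)%:E * (\1_(E k) w)%:E)%E)); last first.
    by move=> w _; rewrite EFinM.
  rewrite integralZl // ?integral_indic // ?setIT.
    by rewrite EFinM; congr (_ * _)%E; exact: prE.
  exact: integrable_indic.
have := sumEFin (index_enum 'I_N) xpredT (fun k => c k * pr (E k)).
move=> ->; done.
Qed.

Lemma ind1 (A : set Omega) w : A w -> \1_A w = 1 :> R.
Proof. by move=> h; rewrite indicE mem_set. Qed.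

Lemma ind0 (A : set Omega) w : ~ A w -> \1_A w = 0 :> R.
Proof. by move=> h; rewrite indicE memNset. Qed.

Lemma exp2 (h : Omega -> R) c0 c1 E0 E1 :
  measurable_fun setT h -> measurable E0 -> measurable E1 ->
  (forall w, G w -> h w = c0 * \1_E0 w + c1 * \1_E1 w) ->
  expect P h = c0 * pr E0 + c1 * pr E1.
Proof.
move=> mh m0 m1 hG.
have := @exp_simple 2 (fun i => nth 0 [:: c0; c1] i) (fun i => nth set0 [:: E0; E1] i) h mh.
rewrite !big_ord_recr big_ord0 /= add0r; apply.
  by move=> [[|[|k]] hk] //=.
by move=> w Gw; rewrite big_ord_recr big_ord_recr big_ord0 /= add0r hG.
Qed.

Lemma exp4 (h : Omega -> R) c0 c1 c2 c3 E0 E1 E2 E3 :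
  measurable_fun setT h -> measurable E0 -> measurable E1 ->
  measurable E2 -> measurable E3 ->
  (forall w, G w -> h w = c0 * \1_E0 w + c1 * \1_E1 w + c2 * \1_E2 w + c3 * \1_E3 w) ->
  expect P h = c0 * pr E0 + c1 * pr E1 + c2 * pr E2 + c3 * pr E3.
Proof.
move=> mh m0 m1 m2 m3 hG.
have := @exp_simple 4 (fun i => nth 0 [:: c0; c1; c2; c3] i)
  (fun i => nth set0 [:: E0; E1; E2; E3] i) h mh.
rewrite !big_ord_recr big_ord0 /= add0r; apply.
  by move=> [[|[|[|[|k]]]] hk] //=.
by move=> w Gw; rewrite !big_ord_recr big_ord0 /= add0r hG.
Qed.

Lemma Gcase (w : Omega) k : G w ->
  (X k w = 0 /\ \1_(X k @^-1` [set 0]) w = 1 :> R /\ \1_(X k @^-1` [set 1]) w = 0 :> R) \/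
  (X k w = 1 /\ \1_(X k @^-1` [set 0]) w = 0 :> R /\ \1_(X k @^-1` [set 1]) w = 1 :> R).
Proof.
move=> Gw; case: (Gw k) => e; [left|right]; (split; [by []|split]).
- exact: ind1.
- by apply: ind0 => /=; rewrite e => /eqP; rewrite e01.
- by apply: ind0 => /=; rewrite e => /eqP; rewrite e10.
- exact: ind1.
Qed.

Lemma expf k (f : R -> R) : measurable_fun setT f ->
  expect P (f \o X k) = f 0 * (1 - p) + f 1 * p.
Proof.
move=> mf; rewrite (@exp2 _ (f 0) (f 1) (X k @^-1` [set 0]) (X k @^-1` [set 1])).
- by rewrite !pr_pt pi0 pi1.
- exact: measurableT_comp (mX k).
- exact: mpt.
- exact: mpt.
move=> w Gw; case: (Gcase k Gw) => [[e [-> ->]]|[e [-> ->]]] /=; rewrite e; ring.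
Qed.

Lemma expf2 k (f : R -> R) : measurable_fun setT f ->
  expect P (fun w => (f \o X k) w ^+ 2) = f 0 ^+ 2 * (1 - p) + f 1 ^+ 2 * p.
Proof.
move=> mf; rewrite (@exp2 _ (f 0 ^+ 2) (f 1 ^+ 2) (X k @^-1` [set 0]) (X k @^-1` [set 1])).
- by rewrite !pr_pt pi0 pi1.
- apply: measurable_realfun.measurable_funX; exact: measurableT_comp (mX k).
- exact: mpt.
- exact: mpt.
move=> w Gw; case: (Gcase k Gw) => [[e [-> ->]]|[e [-> ->]]] /=; rewrite e; ring.
Qed.

Lemma expfg n (f g : R -> R) : measurable_fun setT f -> measurable_fun setT g ->
  expect P (fun w => (f \o X 0) w * (g \o X n) w) =
  f 0 * g 0 * pi 0 * Tn n 0 0 + f 0 * g 1 * pi 0 * Tn n 0 1 +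
  f 1 * g 0 * pi 1 * Tn n 1 0 + f 1 * g 1 * pi 1 * Tn n 1 1.
Proof.
move=> mf mg.
rewrite (@exp4 _ (f 0 * g 0) (f 0 * g 1) (f 1 * g 0) (f 1 * g 1)
  (X 0 @^-1` [set 0] `&` X n @^-1` [set 0]) (X 0 @^-1` [set 0] `&` X n @^-1` [set 1])
  (X 0 @^-1` [set 1] `&` X n @^-1` [set 0]) (X 0 @^-1` [set 1] `&` X n @^-1` [set 1])).
- by rewrite !joint; ring.
- apply: measurable_realfun.measurable_funM; exact: measurableT_comp (mX _).
- exact: mpt2.
- exact: mpt2.
- exact: mpt2.
- exact: mpt2.
move=> w Gw; rewrite !indicI /=.
case: (Gcase 0 Gw) => [[e [-> ->]]|[e [-> ->]]];
  case: (Gcase n Gw) => [[e' [-> ->]]|[e' [-> ->]]] /=; rewrite e e'; ring.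
Qed.

Lemma rho_dec : exp_decay (rho_mix P X).
Proof.
exists 1, r; split; [exact: r_ge0|exact: lam_lt1|] => n.
apply: ge_ereal_sup => _ [f [g [[mf mg] _ [vf vg] ->]]]; rewrite lee_fin mul1r.
have Vf : var P (f \o X 0) = p * (1 - p) * (f 1 - f 0) ^+ 2.
  by rewrite /var expf2 // expf //; ring.
have Vg : var P (g \o X n) = p * (1 - p) * (g 1 - g 0) ^+ 2.
  by rewrite /var expf2 // expf //; ring.
have Cv : cov P (f \o X 0) (g \o X n) =
    lam ^+ n * (p * (1 - p) * (f 1 - f 0) * (g 1 - g 0)).
  by rewrite /cov expfg // !expf // /Tn pi0 pi1 dl00 dl01 dl10 dl11; ring.
set s := p * (1 - p) * (f 1 - f 0) * (g 1 - g 0) in Cv.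
have E : var P (f \o X 0) * var P (g \o X n) = s ^+ 2 by rewrite Vf Vg /s; ring.
have s2 : 0 < s ^+ 2 by rewrite -E; apply: mulr_gt0.
have sn : `|s| != 0.
  rewrite normr_eq0; apply/eqP => s0; move: s2; rewrite s0 expr0n /= ltxx //.
rewrite E sqrtr_sqr Cv normrM normrX mulfK //.
Qed.

End Proofs.

Theorem theorem2 (R : realType) (a p : R) (d : measure_display)
  (Omega : measurableType d) (P : probability Omega R) (X : nat -> Omega -> R) :
  0 < a < 1 -> 0 < p < 1 ->
  copula_generated P X (mix_copula a) (bernoulli_cdf p) ->
  discrete_markov P X ->
  [/\ exp_decay (psi_mix P X), exp_decay (phi_mix P X), exp_decay (rho_mix P X),
      exp_decay (beta_mix P X) & exp_decay (alpha_mix P X)].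
Proof.
move=> ha hp hC hM; split.
- exact: (psi_dec ha hp hC hM).
- exact: (phi_dec ha hp hC hM).
- exact: (rho_dec ha hp hC hM).
- exact: (beta_dec ha hp hC hM).
- exact: (alpha_dec ha hp hC hM).
Qed.
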